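(* (a) If $\tau\in\mathcal{T}$ and the space $(\mathbb{R},\tau)$ is connected, then every interval $I\subset\mathbb{R}$ is connected in $(\mathbb{R},\tau)$. (b) If $F:\mathbb{R}\to\mathbb{R}$ is a function whose graph is a connected subspace of $\mathbb{R}^2$, then $F\cap(I\times\mathbb{R})$ is connected for every interval $I\subset\mathbb{R}$.
   Context: $\eta$ denotes the Euclidean topology on $\mathbb{R}$; $\mathcal{T}$ is the family of all topologies on $\mathbb{R}$ finer than $\eta$. A real function is identified with its graph in $\mathbb{R}^2$ with the subspace topology. *)

(* Defs.v *)
From HB Require Import structures.
From mathcomp Require Import all_boot all_order all_algebra.
From mathcomp Require Import all_classical all_reals all_analysis.
Set Implicit Arguments. Unset Strict Implicit. Unset Printing Implicit Defensive.
Import Order.TTheory GRing.Theory Num.Theory.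
Local Open Scope classical_set_scope.
Local Open Scope ring_scope.

Definition is_topology {R : realType} (tau : set (set R)) : Prop :=
  tau set0 /\ tau setT /\
  (forall (F : set (set R)), F `<=` tau -> tau (\bigcup_(U in F) U)) /\
  (forall U V, tau U -> tau V -> tau (U `&` V)).

Definition finer_than_euclid {R : realType} (tau : set (set R)) : Prop :=
  forall U : set R, @open R^o U -> tau U.

Definition in_calT {R : realType} (tau : set (set R)) : Prop :=
  is_topology tau /\ finer_than_euclid tau.

Definition tau_connected {R : realType} (tau : set (set R)) (A : set R) : Prop :=
  forall U V, tau U -> tau V -> A `<=` U `|` V -> A `&` U `&` V = set0 ->
    A `&` U = set0 \/ A `&` V = set0.

(* The graph of F : R -> R as a subset of R^2 (= R * R with the product,
   i.e. Euclidean, topology). *)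
Definition graph {R : realType} (F : R -> R) : set (R^o * R^o)%type :=
  [set p | p.2 = F p.1].

(* Main.v *)
Require Import Defs.
From HB Require Import structures.
From mathcomp Require Import all_boot all_order all_algebra.
From mathcomp Require Import all_classical all_reals all_analysis.
Import Order.TTheory GRing.Theory Num.Theory.
Local Open Scope classical_set_scope.
Local Open Scope ring_scope.

Lemma conn_sep (T : topologicalType) (A U V : set T) : connected A ->
  open U -> open V -> A `<=` U `|` V -> A `&` U `&` V = set0 ->
  (A `&` U) !=set0 -> (A `&` V) !=set0 -> False.
Proof.
move=> cA oU oV AUV AUV0 [u Au] [v [Av Vv]].
have E : A `&` U = A.
  apply: cA; first by exists u.
    by exists U.
  exists (~` V); first exact: open_closedC.
  apply/seteqP; split => x [Ax Hx]; split => //.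
    by move=> Vx; have : (A `&` U `&` V) x by []; rewrite AUV0.
  by case: (AUV x Ax).
have : (A `&` U) v by rewrite E.
by case=> _ Uv; have : (A `&` U `&` V) v by []; rewrite AUV0.
Qed.

Lemma fst_open (R : realType) (W : set R^o) : @open R^o W ->
  open [set z : R^o * R^o | W z.1].
Proof.
move=> oW; have -> : [set z : R^o * R^o | W z.1] = fst @^-1` W by [].
apply: open_comp => // x _; exact: cvg_fst.
Qed.

Lemma fst_lt (R : realType) (y : R) : open [set z : R^o * R^o | z.1 < y].
Proof. apply: (@fst_open R [set x | x < y]); exact: (@open_lt R y). Qed.

Lemma fst_gt (R : realType) (y : R) : open [set z : R^o * R^o | y < z.1].
Proof. apply: (@fst_open R [set x | y < x]); exact: (@open_gt R y). Qed.

Lemma tau_union (R : realType) (tau : set (set R)) U V :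
  is_topology tau -> tau U -> tau V -> tau (U `|` V).
Proof.
move=> [_ [_ [Hb _]]] tU tV.
have -> : U `|` V = \bigcup_(W in [set W | W = U \/ W = V]) W.
  apply/seteqP; split => x.
    by case=> Hx; [exists U => //; left|exists V => //; right].
  by case=> W [->|->] Hx; [left|right].
by apply: Hb => W [->|->].
Qed.

Lemma partA (R : realType) (tau : set (set R)) : in_calT tau ->
  tau_connected tau setT -> forall I : set R, is_interval I -> tau_connected tau I.
Proof.
move=> [top fin] cT I iI.
have key : forall U V x y, tau U -> tau V -> I `<=` U `|` V ->
    I `&` U `&` V = set0 -> I x -> U x -> I y -> V y -> x < y -> False.
  move=> U V x y tU tV IUV IUV0 Ix Ux Iy Vy xy.
  have tI : forall A B, tau A -> tau B -> tau (A `&` B).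
    by case: top => [_ [_ [_ H]]].
  pose U' := (U `&` [set z | z < y]) `|` [set z | z < x].
  pose V' := (V `&` [set z | x < z]) `|` [set z | y < z].
  have tU' : tau U'.
    apply: tau_union => //; last exact: (fin _ (@open_lt R _)).
    by apply: tI => //; exact: (fin _ (@open_lt R _)).
  have tV' : tau V'.
    apply: tau_union => //; last exact: (fin _ (@open_gt R _)).
    by apply: tI => //; exact: (fin _ (@open_gt R _)).
  have inI : forall z, x <= z <= y -> I z by move=> z; exact: iI.
  case: (cT U' V' tU' tV').
  - move=> z _; case: (ltP z x) => zx; first by left; right.
    case: (ltP y z) => yz; first by right; right.
    have [] := IUV z (inI z (introT andP (conj zx yz))) => Hz.
      case: (ltP z y) => zy; first by left; left.
      have -> : z = y by apply/eqP; rewrite eq_le yz zy.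
      by right; left; split.
    case: (ltP x z) => xz; first by right; left.
    have -> : z = x by apply/eqP; rewrite eq_le xz zx.
    by left; left; split.
  - apply/seteqP; split => // z [[_ Hu] Hv].
    case: Hu => [[Uz zy]|zx]; case: Hv => [[Vz xz]|yz].
    + have Iz : I z by apply: inI; rewrite !ltW.
      by have : (I `&` U `&` V) z by []; rewrite IUV0.
    + by have := lt_trans zy yz; rewrite ltxx.
    + by have := lt_trans zx xz; rewrite ltxx.
    + by have := lt_trans (lt_trans zx xy) yz; rewrite ltxx.
  - by move/seteqP => [+ _] => /(_ x) /=; apply; split => //; left; split.
  - by move/seteqP => [+ _] => /(_ y) /=; apply; split => //; left; split.
move=> U V tU tV IUV IUV0.
case: (pselect ((I `&` U) !=set0)) => [[x [Ix Ux]]|]; last first.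
  by move=> H; left; apply/seteqP; split => // z Hz; apply: H; exists z.
case: (pselect ((I `&` V) !=set0)) => [[y [Iy Vy]]|]; last first.
  by move=> H; right; apply/seteqP; split => // z Hz; apply: H; exists z.
exfalso; case: (ltgtP x y) => xy.
- exact: (key U V x y).
- apply: (key V U y x) => //.
    by move=> z Iz; rewrite setUC; apply: IUV.
  by rewrite setIAC.
- by subst; have : (I `&` U `&` V) y by []; rewrite IUV0.
Qed.

Lemma partB (R : realType) (F : R -> R) : connected (graph F) ->
  forall I : set R, is_interval I -> connected (graph F `&` [set p | I p.1]).
Proof.
move=> cG I iI.
set G := graph F `&` [set p | I p.1].
have key : forall (U V : set (R^o * R^o)%type) a b, open U -> open V ->
    G `<=` U `|` V -> G `&` U `&` V = set0 -> G a -> U a -> G b -> V b ->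
    a.1 < b.1 -> False.
  move=> U V a b oU oV GUV GUV0 Ga Ua Gb Vb ab.
  pose U' := (U `&` [set z : R^o * R^o | z.1 < b.1]) `|` [set z | z.1 < a.1].
  pose V' := (V `&` [set z : R^o * R^o | a.1 < z.1]) `|` [set z | b.1 < z.1].
  have oU' : open U'.
    apply: openU; last exact: (fst_lt _).
    by apply: openI => //; exact: (fst_lt _).
  have oV' : open V'.
    apply: openU; last exact: (fst_gt _).
    by apply: openI => //; exact: (fst_gt _).
  have inG : forall z, graph F z -> a.1 <= z.1 <= b.1 -> G z.
    by move=> z gz Hz; split => //; apply: (iI a.1 b.1) => //; [case: Ga|case: Gb].
  have geq : forall z w, graph F z -> graph F w -> z.1 = w.1 -> z = w.
    move=> [z1 z2] [w1 w2]; rewrite /graph /= => -> -> e; by rewrite e.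
  apply: (conn_sep _ _ _ _ cG oU' oV').
  - move=> z gz; case: (ltP z.1 a.1) => zx; first by left; right.
    case: (ltP b.1 z.1) => yz; first by right; right.
    have [] := GUV z (inG z gz (introT andP (conj zx yz))) => Hz.
      case: (ltP z.1 b.1) => zy; first by left; left.
      have -> : z = b by apply: geq => //; [case: Gb|apply/eqP; rewrite eq_le yz zy].
      by right; left; split.
    case: (ltP a.1 z.1) => xz; first by right; left.
    have -> : z = a by apply: geq => //; [case: Ga|apply/eqP; rewrite eq_le xz zx].
    by left; left; split.
  - apply/seteqP; split => // z [[gz Hu] Hv].
    case: Hu => [[Uz zy]|zx]; case: Hv => [[Vz xz]|yz].
    + have Gz : G z by apply: inG => //; rewrite !ltW.
      by have : (G `&` U `&` V) z by []; rewrite GUV0.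
    + by have := lt_trans zy yz; rewrite ltxx.
    + by have := lt_trans zx xz; rewrite ltxx.
    + by have := lt_trans (lt_trans zx ab) yz; rewrite ltxx.
  - by exists a; split; [case: Ga|left; split].
  - by exists b; split; [case: Gb|left; split].
move=> B [q Bq] [C oC BC] [D cD BD].
apply/seteqP; split; first by rewrite BC; apply: subIsetl.
move=> p Gp; apply: contrapT => nBp.
have Gq : G q by move: Bq; rewrite BC => -[].
have Cq : C q by move: Bq; rewrite BC => -[].
have nDp : ~ D p by move=> Dp; apply: nBp; rewrite BD.
have GUV : G `<=` C `|` ~` D.
  move=> z Gz; case: (pselect (D z)) => Dz; last by right.
  have Bz : B z by rewrite BD.
  by left; move: Bz; rewrite BC => -[].
have GUV0 : G `&` C `&` ~` D = set0.
  apply/seteqP; split => // z [[Gz Cz] nDz].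
  have Bz : B z by rewrite BC.
  by apply: nDz; move: Bz; rewrite BD => -[].
have oV : open (~` D) by exact: closed_openC.
case: (ltgtP q.1 p.1) => qp.
- exact: (key C (~` D) q p).
- apply: (key (~` D) C p q) => //.
    by move=> z Gz; rewrite setUC; apply: GUV.
  by rewrite setIAC.
- have epq : q = p.
    case: Gq Gp => gq _ [gp _]; move: gq gp qp.
    case: q {Bq Cq} => q1 q2; case: p {nBp nDp} => p1 p2.
    by rewrite /graph /= => -> -> ->.
  by subst; apply: nBp.
Qed.

Theorem lemma5 (R : realType) :
  (forall tau : set (set R), in_calT tau -> tau_connected tau setT ->
     forall I : set R, is_interval I -> tau_connected tau I) /\
  (forall F : R -> R, connected (graph F) ->
     forall I : set R, is_interval I ->
       connected (graph F `&` [set p | I p.1])).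
Proof.
split; [exact: partA | exact: partB].
Qed.
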